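(* Let $P=\{\pi=(\pi_0,\dots,\pi_c)\in(0,\infty)^{c+1}:\ \sum_{j=0}^c\pi_j=1,\ (c-j+1)\pi_{j-1}\le \lambda d\,\pi_j \text{ for all } j\in\{1,\dots,c\}\}$ and, for $\pi\in P$, let $$\Pi(\pi)=\sum_{j=1}^c \pi_j\,\lambda\, g\!\left(\frac{(c-j+1)\,\pi_{j-1}}{\lambda d\,\pi_j}\right).$$ Then $P$ is convex and $\Pi$ is concave on $P$. Moreover, for every $\pi\in P$, setting $x_j=\frac{(c-j+1)\pi_{j-1}}{\lambda d\pi_j}$ for $j=1,\dots,c$ defines a stock-dependent policy $\mathbf x\in(0,1]^c$ whose steady-state distribution is $\pi$ and whose long-run average reward is $\mathcal R(\mathbf x)=\Pi(\pi)$; thus maximizing over stock-dependent policies with strictly positive steady-state probabilities is a convex program in $\pi$.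
   Context: Setting. Fix $c\in\mathbb N$ (number of identical units of a single reusable resource), an arrival rate $\lambda>0$ and a mean usage duration $d>0$, with $x^*:=c/(\lambda d)\in(0,1)$. Let $g:[0,1]\to\mathbb R$ be concave, non-decreasing, with $g(0)=0$ (the reward function; $\partial g(x)$ denotes its set of supergradients at $x$). A stock-dependent policy is a vector $\mathbf x=(x_1,\dots,x_c)\in[0,1]^c$, where $x_j$ is the admission probability used when exactly $j$ units are available (the admission probability is $0$ when no unit is available). Its steady-state distribution is the unique probability vector $\pi=(\pi_0,\dots,\pi_c)$ satisfying $\pi_j\lambda x_j=\pi_{j-1}(c-j+1)/d$ for all $j\in\{1,\dots,c\}$ (by an insensitivity result, for any usage-duration distribution with mean $d$, $\pi_j$ is the long-run fraction of time with exactly $j$ units available), and its long-run average reward is $\mathcal R(\mathbf x)=\sum_{j=1}^c\pi_j\lambda g(x_j)$. *)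

(* Defs.v *)
From HB Require Import structures.
From mathcomp Require Import all_boot all_order all_algebra.
From mathcomp Require Import boolp classical_sets reals.
Set Implicit Arguments. Unset Strict Implicit. Unset Printing Implicit Defensive.
Import Order.TTheory GRing.Theory Num.Theory.
Local Open Scope ring_scope.
Local Open Scope classical_set_scope.

Section Defs.
Variable R : realType.

(* Indexing conventions:
   - a distribution pi = (pi_0,...,pi_c) is a function 'I_c.+1 -> R;
   - a stock-dependent policy x = (x_1,...,x_c) is a function 'I_c -> R,
     where x i (i : 'I_c) stands for x_{i+1}.
   For i : 'I_c, with j = i+1: pi_j = pi (inord i.+1), pi_{j-1} = pi (inord i),
   and c - j + 1 = c - i. *)

Definition concave_on01 (g : R -> R) : Prop :=
  forall x y t : R, 0 <= x <= 1 -> 0 <= y <= 1 -> 0 <= t <= 1 ->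
    t * g x + (1 - t) * g y <= g (t * x + (1 - t) * y).

Definition nondecreasing_on01 (g : R -> R) : Prop :=
  forall x y : R, 0 <= x <= 1 -> 0 <= y <= 1 -> x <= y -> g x <= g y.

Definition policy (c : nat) (x : 'I_c -> R) : Prop :=
  forall i, 0 <= x i <= 1.

Definition is_steady_state (c : nat) (lam d : R) (x : 'I_c -> R)
    (pi : 'I_c.+1 -> R) : Prop :=
  (forall j, 0 <= pi j) /\ \sum_(j < c.+1) pi j = 1 /\
  forall i : 'I_c,
    pi (inord i.+1) * lam * x i = pi (inord i) * (c - i)%N%:R / d.

Definition steady_state (c : nat) (lam d : R) (x : 'I_c -> R) : 'I_c.+1 -> R :=
  xget (fun _ => 0) [set pi | @is_steady_state c lam d x pi].

Definition avg_reward (c : nat) (lam d : R) (g : R -> R) (x : 'I_c -> R) : R :=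
  \sum_(i < c) @steady_state c lam d x (inord i.+1) * lam * g (x i).

Definition Pset (c : nat) (lam d : R) : set ('I_c.+1 -> R) :=
  [set pi | (forall j, 0 < pi j) /\ \sum_(j < c.+1) pi j = 1 /\
     forall i : 'I_c, (c - i)%N%:R * pi (inord i) <= lam * d * pi (inord i.+1)].

Definition policy_of (c : nat) (lam d : R) (pi : 'I_c.+1 -> R) : 'I_c -> R :=
  fun i => (c - i)%N%:R * pi (inord i) / (lam * d * pi (inord i.+1)).

Definition PiR (c : nat) (lam d : R) (g : R -> R) (pi : 'I_c.+1 -> R) : R :=
  \sum_(i < c) pi (inord i.+1) * lam * g (@policy_of c lam d pi i).

Definition convex_comb (c : nat) (t : R) (p q : 'I_c.+1 -> R) : 'I_c.+1 -> R :=
  fun j => t * p j + (1 - t) * q j.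

End Defs.

(* Main.v *)
Require Import Defs.
From HB Require Import structures.
From mathcomp Require Import all_boot all_order all_algebra.
From mathcomp Require Import boolp classical_sets reals.
From mathcomp Require Import ring lra.
Import Order.TTheory GRing.Theory Num.Theory.
Local Open Scope ring_scope.
Local Open Scope classical_set_scope.

Lemma persp (R : realType) (g : R -> R) (hgconc : concave_on01 g)
  (z1 z2 w1 w2 t : R) : 0 < z1 -> 0 < z2 -> 0 <= w1 <= 1 -> 0 <= w2 <= 1 ->
  0 <= t <= 1 ->
  t * (z1 * g w1) + (1 - t) * (z2 * g w2) <=
  (t * z1 + (1 - t) * z2) * g ((t * z1 * w1 + (1 - t) * z2 * w2) / (t * z1 + (1 - t) * z2)).
Proof.
move=> z1p z2p hw1 hw2 /andP[t0 t1].
have [Z eZ] : exists Z, Z = t * z1 + (1 - t) * z2 by eexists.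
rewrite -eZ.
have Zp : 0 < Z by rewrite eZ; nra.
have Zn : Z != 0 by rewrite gt_eqF.
have [mu emu] : exists mu, mu = t * z1 / Z by eexists.
have mu0 : 0 <= mu by rewrite emu; apply: divr_ge0; [apply: mulr_ge0 => //; exact: ltW | exact: ltW].
have mu1 : mu <= 1.
  rewrite emu ler_pdivrMr // mul1r eZ; nra.
have := hgconc w1 w2 mu hw1 hw2 (introT andP (conj mu0 mu1)).
have e1 : 1 - mu = (1 - t) * z2 / Z by rewrite emu eZ; field; rewrite -eZ.
have e2 : mu * w1 + (1 - mu) * w2 = (t * z1 * w1 + (1 - t) * z2 * w2) / Z.
  by rewrite e1 emu; field.
rewrite e2 => H.
have := ler_wpM2l (ltW Zp) H.
have -> : Z * (mu * g w1 + (1 - mu) * g w2) = t * (z1 * g w1) + (1 - t) * (z2 * g w2).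
  by rewrite e1 emu; field.
done.
Qed.
Lemma part1 (R : realType) (c : nat) (lam d : R) (hlam : 0 < lam) (hd : 0 < d)
  (p q : 'I_c.+1 -> R) (t : R) : Pset lam d p -> Pset lam d q ->
     0 <= t <= 1 -> Pset lam d (convex_comb t p q).
Proof.
move=> [pp [ps pi]] [qp [qs qi]] /andP[t0 t1].
split; [|split].
- move=> j; rewrite /convex_comb; have := pp j; have := qp j; nra.
- rewrite /convex_comb big_split /= -!mulr_sumr ps qs; ring.
- move=> i; rewrite /convex_comb.
  have := pi i; have := qi i.
  move: ((c - i)%N%:R) (lam * d) => a b h1 h2.
  have h3 := ler_wpM2l t0 h2.
  have t0' : 0 <= 1 - t by lra.
  have h4 := ler_wpM2l t0' h1.
  nra.
Qed.

Lemma part3 (R : realType) (c : nat) (lam d : R) (g : R -> R) (hlam : 0 < lam) (hd : 0 < d)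
  (pi : 'I_c.+1 -> R) : Pset lam d pi ->
     let x := policy_of lam d pi in
     (forall i, 0 < x i <= 1) /\
     steady_state lam d x = pi /\
     avg_reward lam d g x = PiR lam d g pi.
Proof.
move=> [pp [ps pi_ineq]] x.
have xpos : forall i, 0 < x i <= 1.
  move=> i; have h0 := pp (inord i); have h1 := pp (inord i.+1).
  have ci : (0 < (c - i)%N%:R :> R) by rewrite ltr0n subn_gt0.
  apply/andP; split.
  - rewrite /x /policy_of; apply: divr_gt0; first exact: mulr_gt0.
    by apply: mulr_gt0 => //; apply: mulr_gt0.
  - rewrite /x /policy_of ler_pdivrMr ?mul1r //.
    by apply: mulr_gt0 => //; apply: mulr_gt0.
have hss : is_steady_state lam d x pi.
  split; first by move=> j; apply: ltW.
  split => // i; rewrite /x /policy_of.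
  have h1 := pp (inord i.+1).
  by field; rewrite !gt_eqF.
have hst : steady_state lam d x = pi.
  clearbody x.
  apply: xget_unique => // y [yp [ys ye]].
  have p0 := pp (inord 0).
  set k := y (inord 0) / pi (inord 0).
  have ind : forall j, (j <= c)%N -> y (inord j) = k * pi (inord j).
    elim=> [|j IH] hj.
      by rewrite /k mulfVK // gt_eqF.
    have hjc : (j < c)%N by [].
    pose o := Ordinal hjc.
    have e1 : y (inord j.+1) * lam * x o = y (inord j) * (c - j)%:R / d := ye o.
    have e2 : pi (inord j.+1) * lam * x o = pi (inord j) * (c - j)%:R / d :=
      proj2 (proj2 hss) o.
    have lx : lam * x o != 0.
      by rewrite mulf_neq0 // gt_eqF //; case/andP: (xpos o).
    rewrite IH in e1; last exact: ltnW.
    move: e1 e2 lx; rewrite -!mulrA.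
    move: (lam * x o) (y (inord j.+1)) (pi (inord j.+1)) (pi (inord j)) => L Y P Q.
    move=> e1 e2 lx; apply: (mulIf lx).
    by rewrite e1 -mulrA -(mulrA _ P) e2.
  have k1 : k = 1.
    rewrite -ys -[k]mulr1 -ps mulr_sumr; apply: eq_bigr => j _.
    by have := ind j (ltn_ord j); rewrite inord_val.
  by apply: funext => j; have := ind j (ltn_ord j); rewrite inord_val k1 mul1r.
split => //; split => //.
by rewrite /avg_reward hst.
Qed.

Lemma part2 (R : realType) (c : nat) (lam d : R) (g : R -> R) (hlam : 0 < lam) (hd : 0 < d)
  (hgconc : concave_on01 g)
  (p q : 'I_c.+1 -> R) (t : R) : Pset lam d p -> Pset lam d q ->
     0 <= t <= 1 ->
     t * PiR lam d g p + (1 - t) * PiR lam d g q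
       <= PiR lam d g (convex_comb t p q).
Proof.
move=> hp hq ht.
have [hcp _] := @part1 R c lam d hlam hd p q t hp hq ht.
have [xp _] := @part3 R c lam d g hlam hd p hp.
have [xq _] := @part3 R c lam d g hlam hd q hq.
have [pp _] := hp; have [qp _] := hq.
rewrite /PiR !mulr_sumr -big_split; apply: ler_sum => i _.
have p1 := pp (inord i.+1); have q1 := qp (inord i.+1).
have Zp := hcp (inord i.+1).
have /andP[xp0 xp1] := xp i; have /andP[xq0 xq1] := xq i.
have h := @persp R g hgconc _ _ _ _ t p1 q1 (introT andP (conj (ltW xp0) xp1))
   (introT andP (conj (ltW xq0) xq1)) ht.
have eZ : policy_of lam d (convex_comb t p q) i =
  (t * p (inord i.+1) * policy_of lam d p i + (1 - t) * q (inord i.+1) * policy_of lam d q i) /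
  (t * p (inord i.+1) + (1 - t) * q (inord i.+1)).
  rewrite /policy_of /convex_comb in Zp *.
  field; rewrite !gt_eqF //.
rewrite eZ /convex_comb /=.
have h2 := ler_wpM2r (ltW hlam) h.
move: h2; set G1 := g _; set G2 := g _; set G3 := g _ => h2.
rewrite (_ : t * (p (inord i.+1) * lam * G1) + (1 - t) * (q (inord i.+1) * lam * G2) =
  (t * (p (inord i.+1) * G1) + (1 - t) * (q (inord i.+1) * G2)) * lam); last by ring.
rewrite (_ : (t * p (inord i.+1) + (1 - t) * q (inord i.+1)) * lam * G3 =
  (t * p (inord i.+1) + (1 - t) * q (inord i.+1)) * G3 * lam); last by ring.
exact: h2.
Qed.

Theorem proposition2 (R : realType) (c : nat) (lam d : R) (g : R -> R)
  (hlam : 0 < lam) (hd : 0 < d)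
  (hxstar : 0 < c%:R / (lam * d) < 1)
  (hgconc : concave_on01 g) (hgmono : nondecreasing_on01 g) (hg0 : g 0 = 0) :
  (* P is convex *)
  (forall (p q : 'I_c.+1 -> R) (t : R), @Pset R c lam d p -> @Pset R c lam d q ->
     0 <= t <= 1 -> @Pset R c lam d (convex_comb t p q)) /\
  (* Pi is concave on P *)
  (forall (p q : 'I_c.+1 -> R) (t : R), @Pset R c lam d p -> @Pset R c lam d q ->
     0 <= t <= 1 ->
     t * PiR lam d g p + (1 - t) * PiR lam d g q
       <= PiR lam d g (convex_comb t p q)) /\
  (* the induced policy *)
  (forall pi : 'I_c.+1 -> R, @Pset R c lam d pi ->
     let x := policy_of lam d pi in
     (forall i, 0 < x i <= 1) /\
     steady_state lam d x = pi /\
     avg_reward lam d g x = PiR lam d g pi).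
Proof.
split; first by move=> p q t; exact: part1.
split; first by move=> p q t; exact: part2.
by move=> pi; exact: part3.
Qed.
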